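(* Let $A=\mathbb{C}Q/I$ be a toupie algebra and let $Q_a$ be the $a$-Kronecker quiver (two vertices, a source and a sink, and $a$ arrows from the source to the sink). The Lie subalgebra of $\mathrm{HH}^1(A)$ generated by $\{x_j, w_{pq}: p\ne q,\ 1\le p,q\le a,\ 2\le j\le a\}$ is isomorphic to $\mathrm{HH}^1(\mathbb{C}Q_a)$.
   Context: A finite quiver $Q$ is a toupie quiver if it has a unique source $0$, a unique sink $\omega$, and every other vertex is the source of exactly one arrow and the target of exactly one arrow. A branch is a path from $0$ to $\omega$. A toupie algebra is $A=\mathbb{C}Q/I$ with $Q$ toupie and $I$ an admissible ideal generated by monomial relations (paths inside one branch) and non-monomial relations (linear combinations of branches). $\alpha^{(1)},\dots,\alpha^{(a)}$ are the arrows from $0$ to $\omega$. $E=\mathbb{C}Q_0$. For an arrow $\gamma$ and $h\in e_{s(\gamma)}Ae_{t(\gamma)}$, $\gamma\|h$ is the derivation of $A$ vanishing on $E$ sending $\gamma$ to $h$ and other arrows to $0$; $\mathrm{HH}^1(A)$ (derivations vanishing on $E$ modulo inner ones) is a Lie algebra under the Gerstenhaber bracket. $w_{pq}$ is the class of $\alpha^{(p)}\|\alpha^{(q)}$ for $p\neq q$, and $x_j$ the class of $\alpha^{(j)}\|\alpha^{(j)}-\alpha^{(1)}\|\alpha^{(1)}$. *)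

(* Defs.v *)
From HB Require Import structures.
From mathcomp Require Import all_boot all_order all_algebra.
From mathcomp Require Import complex Rstruct.

Set Implicit Arguments.
Unset Strict Implicit.
Unset Printing Implicit Defensive.
Import GRing.Theory.
Local Open Scope ring_scope.

Definition CC : fieldType := (Rdefinitions.R)[i].

Section PathAlgebra.
Variables (V Ar : finType) (s t : Ar -> V).

(** A (candidate) path: starting vertex and a sequence of arrows
    (composed left to right, i.e. first arrow first). *)
Definition qpath : Type := (V * seq Ar)%type.

Definition ptgt (p : qpath) : V := last p.1 (map t p.2).

Definition pvalid (p : qpath) : bool :=
  (if p.2 is a :: _ then s a == p.1 else true) &&
  sorted (fun a b => t a == s b) p.2.

(** Elements of the path algebra CQ: coefficient functions on paths,
    vanishing on non-paths.  (Q finite and, for admissible ideals, acyclic,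
    so this is the usual path algebra.) *)
Definition elt : Type := qpath -> CC.

Definition inCQ (f : elt) : Prop := forall p, ~~ pvalid p -> f p = 0.

Definition ezero : elt := fun _ => 0.
Definition eadd (f g : elt) : elt := fun p => f p + g p.
Definition eopp (f : elt) : elt := fun p => - f p.
Definition escale (c : CC) (f : elt) : elt := fun p => c * f p.
(** product = concatenation of paths *)
Definition emul (f g : elt) : elt := fun p =>
  \sum_(k < (size p.2).+1)
     f (p.1, take k p.2) * g (ptgt (p.1, take k p.2), drop k p.2).
Definition edelta (q : qpath) : elt := fun p => if p == q then 1 else 0.
Definition evx (v : V) : elt := edelta (v, [::]).
Definition earr (a : Ar) : elt := edelta (s a, [:: a]).

Inductive ideal_gen (S : elt -> Prop) : elt -> Prop :=
| ig_zero : ideal_gen S ezero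
| ig_add f g : ideal_gen S f -> ideal_gen S g -> ideal_gen S (eadd f g)
| ig_gen x r y : S r -> inCQ x -> inCQ y -> ideal_gen S (emul (emul x r) y).

(** f lies in R^m, R the arrow ideal *)
Definition inRpow (m : nat) (f : elt) : Prop :=
  forall p, (size p.2 < m)%N -> f p = 0.

Definition admissible (I : elt -> Prop) : Prop :=
  (forall f, I f -> inRpow 2 f) /\
  exists m, forall f, inCQ f -> inRpow m f -> I f.

Variable I : elt -> Prop.

Definition eqA (f g : elt) : Prop := I (eadd f (eopp g)).

(** [D] (a map on representatives) induces a C-linear derivation of A
    vanishing on E. *)
Definition DerE (D : elt -> elt) : Prop :=
  [/\ forall f, inCQ f -> inCQ (D f),
      forall f g, inCQ f -> inCQ g -> eqA f g -> eqA (D f) (D g)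
    & [/\ forall f g, inCQ f -> inCQ g -> eqA (D (eadd f g)) (eadd (D f) (D g)),
      forall c f, inCQ f -> eqA (D (escale c f)) (escale c (D f)),
      forall f g, inCQ f -> inCQ g ->
        eqA (D (emul f g)) (eadd (emul (D f) g) (emul f (D g)))
    & forall v, eqA (D (evx v)) ezero]].

Definition Inner (D : elt -> elt) : Prop :=
  exists2 x, inCQ x &
    forall f, inCQ f -> eqA (D f) (eadd (emul x f) (eopp (emul f x))).

Definition dzero : elt -> elt := fun _ => ezero.
Definition dadd (D D' : elt -> elt) : elt -> elt := fun f => eadd (D f) (D' f).
Definition dscale (c : CC) (D : elt -> elt) : elt -> elt :=
  fun f => escale c (D f).
(** Gerstenhaber bracket on HH^1 = commutator of derivations *)
Definition dbr (D D' : elt -> elt) : elt -> elt :=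
  fun f => eadd (D (D' f)) (eopp (D' (D f))).

(** equality of classes in HH^1(A) = Der_E(A)/Inn_E(A) *)
Definition hheq (D D' : elt -> elt) : Prop :=
  Inner (fun f => eadd (D f) (eopp (D' f))).

(** Lie subalgebra of HH^1(A) generated by a set G of (representatives of)
    classes, described by the set of representatives of its classes. *)
Inductive lie_gen (G : (elt -> elt) -> Prop) : (elt -> elt) -> Prop :=
| lg_gen D : G D -> lie_gen G D
| lg_zero : lie_gen G dzero
| lg_add D D' : lie_gen G D -> lie_gen G D' -> lie_gen G (dadd D D')
| lg_scale c D : lie_gen G D -> lie_gen G (dscale c D)
| lg_br D D' : lie_gen G D -> lie_gen G D' -> lie_gen G (dbr D D')
| lg_eq D D' : lie_gen G D -> DerE D' -> hheq D D' -> lie_gen G D'.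

(** [D] is (a representative of) the derivation sending each arrow [b]
    to [h b] (and vanishing on E); for h b = (if b == g then x else 0)
    this is the derivation  g || x  of the paper. *)
Definition on_arrows (D : elt -> elt) (h : Ar -> elt) : Prop :=
  DerE D /\ forall b, eqA (D (earr b)) (h b).

End PathAlgebra.

Arguments ezero {V Ar}.
Arguments eadd {V Ar}.
Arguments eopp {V Ar}.
Arguments escale {V Ar}.
Arguments edelta {V Ar}.

Section Toupie.
Variables (V Ar : finType) (s t : Ar -> V).

Definition is_toupie (o w : V) : Prop :=
  [/\ o != w,
      forall v, [forall a, t a != v] = (v == o),
      forall v, [forall a, s a != v] = (v == w)
    & forall v, v != o -> v != w ->
        #|[pred a | s a == v]| = 1%N /\ #|[pred a | t a == v]| = 1%N].

Definition is_branch (o w : V) (p : qpath V Ar) : bool :=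
  [&& pvalid s t p, p.1 == o & ptgt t p == w].

(** admissible generators of a toupie algebra: monomial relations (paths
    lying inside one branch) and non-monomial relations (linear combinations
    of branches). *)
Definition toupie_rel (o w : V) (r : elt V Ar) : Prop :=
  inCQ s t r /\
  ((exists p b, [/\ pvalid s t p, is_branch o w b, infix p.2 b.2 & r = edelta p])
   \/ (forall p, r p != 0 -> is_branch o w p)).

End Toupie.

(** ---- The a-Kronecker quiver Q_a: vertices false (source), true (sink),
    arrows 'I_a all from false to true. ---- *)
Definition kron_s (a : nat) : 'I_a -> bool := fun _ => false.
Definition kron_t (a : nat) : 'I_a -> bool := fun _ => true.
Arguments kron_s : clear implicits.
Arguments kron_t : clear implicits.
Definition kron_I (a : nat) : elt bool 'I_a -> Prop :=
  ideal_gen (kron_s a) (kron_t a) (fun _ => False).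
Arguments kron_I : clear implicits.

Definition HH1_iso_sub
  (V1 Ar1 : finType) (s1 t1 : Ar1 -> V1) (I1 : elt V1 Ar1 -> Prop)
  (V2 Ar2 : finType) (s2 t2 : Ar2 -> V2) (I2 : elt V2 Ar2 -> Prop)
  (L : (elt V2 Ar2 -> elt V2 Ar2) -> Prop) : Prop :=
  exists phi : (elt V1 Ar1 -> elt V1 Ar1) -> (elt V2 Ar2 -> elt V2 Ar2),
  [/\
      forall D, DerE s1 t1 I1 D -> DerE s2 t2 I2 (phi D) /\ L (phi D),
      forall D D', DerE s1 t1 I1 D -> DerE s1 t1 I1 D' ->
        hheq s1 t1 I1 D D' -> hheq s2 t2 I2 (phi D) (phi D')
    & [/\
      forall D D', DerE s1 t1 I1 D -> DerE s1 t1 I1 D' ->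
        hheq s2 t2 I2 (phi (dadd D D')) (dadd (phi D) (phi D')),
      forall c D, DerE s1 t1 I1 D ->
        hheq s2 t2 I2 (phi (dscale c D)) (dscale c (phi D)),
      forall D D', DerE s1 t1 I1 D -> DerE s1 t1 I1 D' ->
        hheq s2 t2 I2 (phi (dbr D D')) (dbr (phi D) (phi D')),
      forall D, DerE s1 t1 I1 D -> Inner s2 t2 I2 (phi D) -> Inner s1 t1 I1 D
    &
      forall D2, DerE s2 t2 I2 D2 -> L D2 ->
        exists2 D, DerE s1 t1 I1 D & hheq s2 t2 I2 (phi D) D2]].

(* Main.v *)
Require Import Defs.
From HB Require Import structures.
From mathcomp Require Import all_boot all_order all_algebra.
From mathcomp Require Import complex Rstruct.
From mathcomp Require Import ring.
From Stdlib Require Import FunctionalExtensionality.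
Set Implicit Arguments.
Unset Strict Implicit.
Unset Printing Implicit Defensive.
Import GRing.Theory Num.Theory.
Local Open Scope ring_scope.

Section Gen.
Variables (V Ar : finType) (s t : Ar -> V).
Implicit Types (f g h x y : elt V Ar) (p : qpath V Ar).

Lemma efun f g : (forall p, f p = g p) -> f = g.
Proof. exact: functional_extensionality. Qed.

Lemma emulE f g p : emul t f g p = \sum_(0 <= k < (size p.2).+1)
  f (p.1, take k p.2) * g (ptgt t (p.1, take k p.2), drop k p.2).
Proof. by rewrite big_mkord. Qed.

Lemma emulDl f g h : emul t (eadd f g) h = eadd (emul t f h) (emul t g h).
Proof. apply: efun => p; rewrite /emul /eadd -big_split; apply: eq_bigr => k _; exact: mulrDl. Qed.
Lemma emulDr f g h : emul t h (eadd f g) = eadd (emul t h f) (emul t h g).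
Proof. apply: efun => p; rewrite /emul /eadd -big_split; apply: eq_bigr => k _; exact: mulrDr. Qed.
Lemma emulZl c f g : emul t (escale c f) g = escale c (emul t f g).
Proof. apply: efun => p; rewrite /emul /escale mulr_sumr; apply: eq_bigr => k _; by rewrite mulrA. Qed.
Lemma emulZr c f g : emul t f (escale c g) = escale c (emul t f g).
Proof. apply: efun => p; rewrite /emul /escale mulr_sumr; apply: eq_bigr => k _; by rewrite mulrCA. Qed.
Lemma emulNl f g : emul t (eopp f) g = eopp (emul t f g).
Proof. apply: efun => p; rewrite /emul /eopp -sumrN; apply: eq_bigr => k _; exact: mulNr. Qed.
Lemma emulNr f g : emul t f (eopp g) = eopp (emul t f g).
Proof. apply: efun => p; rewrite /emul /eopp -sumrN; apply: eq_bigr => k _; exact: mulrN. Qed.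
Lemma emul0l f : emul t ezero f = ezero.
Proof. apply: efun => p; rewrite /emul /ezero big1 // => k _; exact: mul0r. Qed.
Lemma emul0r f : emul t f ezero = ezero.
Proof. apply: efun => p; rewrite /emul /ezero big1 // => k _; exact: mulr0. Qed.

Lemma emul_evx_l v f p : emul t (evx v) f p = if p.1 == v then f p else 0.
Proof.
rewrite /emul big_ord_recl /= take0 drop0 big1 ?addr0.
  rewrite /evx /edelta /= xpair_eqE eqxx andbT; case: eqP => _; rewrite ?mul1r ?mul0r //.
  by case: p.
move=> k _; rewrite /evx /edelta /=.
have: take (bump 0 k) p.2 != [::].
  rewrite -size_eq0 size_takel; last by rewrite /bump /=; exact: ltn_ord.
  by [].
by rewrite xpair_eqE andbC => /negbTE ->; rewrite mul0r.
Qed.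

Lemma emul_evx_r v f p : emul t f (evx v) p = if ptgt t p == v then f p else 0.
Proof.
rewrite /emul big_ord_recr /= take_size drop_size big1 ?add0r.
  rewrite /evx /edelta /= xpair_eqE eqxx andbT; case: p => v0 l /=; case: eqP => _; rewrite ?mulr1 ?mulr0 //.
move=> k _; rewrite /evx /edelta /=.
have: drop k p.2 != [::].
  by rewrite -size_eq0 size_drop subn_eq0 -ltnNge ltn_ord.
by rewrite xpair_eqE andbC => /negbTE ->; rewrite mulr0.
Qed.

Lemma emul1 f g v b : emul t f g (v, [:: b]) =
  f (v, [::]) * g (v, [:: b]) + f (v, [:: b]) * g (t b, [::]).
Proof. by rewrite /emul !big_ord_recl big_ord0 addr0. Qed.

Lemma ptgt_cat v l1 l2 : ptgt t (v, l1 ++ l2) = ptgt t (ptgt t (v, l1), l2).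
Proof. by rewrite /ptgt /= map_cat last_cat. Qed.

Lemma pvalid_cons v b l : pvalid s t (v, b :: l) = (s b == v) && pvalid s t (t b, l).
Proof.
rewrite /pvalid /=; case: l => [|c l] /=; first by rewrite andbT.
by rewrite [s c == _]eq_sym.
Qed.

Lemma pvalid_cat v l1 l2 :
  pvalid s t (v, l1 ++ l2) = pvalid s t (v, l1) && pvalid s t (ptgt t (v, l1), l2).
Proof.
elim: l1 v => [|b l1 IH] v; first by [].
by rewrite cat_cons !pvalid_cons IH -andbA.
Qed.

Lemma inCQ_mul f g : inCQ s t f -> inCQ s t g -> inCQ s t (emul t f g).
Proof.
move=> Hf Hg [v l] Hp; rewrite /emul big1 // => k _ /=.
move: Hp; rewrite /= -{1}(cat_take_drop k l) pvalid_cat negb_and.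
case/orP => H; first by rewrite Hf // mul0r.
by rewrite Hg // mulr0.
Qed.

Lemma emulA f g h : emul t (emul t f g) h = emul t f (emul t g h).
Proof.
apply: efun => -[v l] /=; set N := (size l).+1.
rewrite emulE /=.
transitivity (\sum_(0 <= k < N) \sum_(0 <= j < N)
   (if (j <= k)%N then f (v, take j l) * g (ptgt t (v, take j l), take (k - j) (drop j l))
                   * h (ptgt t (v, take k l), drop k l) else 0)).
  apply: eq_big_nat => k /andP [_ Hk].
  rewrite emulE /= size_takel // mulr_suml (big_nat_widen _ _ _ _ _ Hk) big_mkcond.
  apply: eq_big_nat => j /andP [_ Hj]; rewrite ltnS.
  case: (leqP j k) => // Hjk.
  by rewrite take_takel // take_drop subnK.
rewrite exchange_big_nat emulE /=.
apply: eq_big_nat => j /andP [_ Hj].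
rewrite emulE /= size_drop mulr_sumr.
rewrite (@big_cat_nat _ _ _ j) ?leq0n ?(ltnW Hj) //= [X in X + _]big1_seq ?add0r; last first.
  by move=> i; rewrite mem_index_iota => /andP [_]; rewrite ltnNge => /negbTE ->.
have Hj' : (j <= size l)%N by exact: Hj.
rewrite -{1}[j]add0n big_addn /N (subSn Hj').
apply: eq_big_nat => i /andP [_ Hi].
rewrite leq_addl addnK -ptgt_cat -takeD drop_drop -mulrA.
by rewrite [(j + i)%N]addnC.
Qed.

End Gen.

Section Ideal.
Variables (V Ar : finType) (s t : Ar -> V) (S : elt V Ar -> Prop).
Implicit Types (f g h x y : elt V Ar) (p : qpath V Ar).
Local Notation I := (ideal_gen s t S).
Local Notation "f === g" := (eqA I f g) (at level 70).

Lemma inCQ0 : inCQ s t ezero. Proof. by []. Qed.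
Lemma inCQD f g : inCQ s t f -> inCQ s t g -> inCQ s t (eadd f g).
Proof. by move=> Hf Hg p Hp; rewrite /eadd Hf // Hg // addr0. Qed.
Lemma inCQZ c f : inCQ s t f -> inCQ s t (escale c f).
Proof. by move=> Hf p Hp; rewrite /escale Hf // mulr0. Qed.
Lemma inCQN f : inCQ s t f -> inCQ s t (eopp f).
Proof. by move=> Hf p Hp; rewrite /eopp Hf // oppr0. Qed.
Lemma inCQ_delta q : pvalid s t q -> inCQ s t (edelta q).
Proof. by move=> Hq p Hp; rewrite /edelta; case: eqP => // E; rewrite E Hq in Hp. Qed.
Lemma inCQ_evx v : inCQ s t (evx v).
Proof. by apply: inCQ_delta. Qed.
Lemma inCQ_earr b : inCQ s t (earr s b).
Proof. by apply: inCQ_delta; rewrite /pvalid /= eqxx. Qed.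

Lemma Ipt f g : I f -> (forall p, f p = g p) -> I g.
Proof. by move=> If /efun <-. Qed.
Lemma I0 f : (forall p, f p = 0) -> I f.
Proof. by move=> H; apply: (Ipt (ig_zero _ _ _)). Qed.
Lemma IZ c f : I f -> I (escale c f).
Proof.
elim=> [|f1 g1 _ H1 _ H2|x r y Sr Hx Hy].
- by apply: I0 => p; rewrite /escale /ezero mulr0.
- apply: Ipt (ig_add H1 H2) _ => p; by rewrite /escale /eadd mulrDr.
- have -> : escale c (emul t (emul t x r) y) = emul t (emul t (escale c x) r) y.
    by rewrite !emulZl.
  by apply: ig_gen => //; apply: inCQZ.
Qed.
Lemma IN f : I f -> I (eopp f).
Proof. by move=> /(IZ (-1)) H; apply: Ipt H _ => p; rewrite /escale /eopp mulN1r. Qed.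
Lemma Imulr f g : I f -> inCQ s t g -> I (emul t f g).
Proof.
move=> If Hg; elim: If => [|f1 g1 _ H1 _ H2|x r y Sr Hx Hy].
- by rewrite emul0l; apply: ig_zero.
- by rewrite emulDl; apply: ig_add.
- by rewrite emulA; apply: ig_gen => //; apply: inCQ_mul.
Qed.
Lemma Imull f g : I f -> inCQ s t g -> I (emul t g f).
Proof.
move=> If Hg; elim: If => [|f1 g1 _ H1 _ H2|x r y Sr Hx Hy].
- by rewrite emul0r; apply: ig_zero.
- by rewrite emulDr; apply: ig_add.
- by rewrite -!emulA; apply: ig_gen => //; apply: inCQ_mul.
Qed.

Lemma eqA_pt f g : (forall p, f p = g p) -> f === g.
Proof. by move=> H; apply: I0 => p; rewrite /eadd /eopp H subrr. Qed.
Lemma eqA_refl f : f === f. Proof. exact: eqA_pt. Qed.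
Lemma eqA_sym f g : f === g -> g === f.
Proof. by move/IN => H; apply: Ipt H _ => p; rewrite /eadd /eopp opprD opprK addrC. Qed.
Lemma eqA_trans f g h : f === g -> g === h -> f === h.
Proof.
move=> H1 H2; apply: Ipt (ig_add H1 H2) _ => p.
by rewrite /eadd /eopp addrA subrK.
Qed.
Lemma eqA_add f f' g g' : f === f' -> g === g' -> eadd f g === eadd f' g'.
Proof.
move=> H1 H2; apply: Ipt (ig_add H1 H2) _ => p.
by rewrite /eadd /eopp opprD addrACA.
Qed.
Lemma eqA_scale c f g : f === g -> escale c f === escale c g.
Proof. by move/(IZ c) => H; apply: Ipt H _ => p; rewrite /escale /eadd /eopp mulrDr mulrN. Qed.
Lemma eqA_opp f g : f === g -> eopp f === eopp g.
Proof. by move/IN => H; apply: Ipt H _ => p; rewrite /eadd /eopp opprD. Qed.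
Lemma eqA_mull h f g : inCQ s t h -> f === g -> emul t h f === emul t h g.
Proof.
move=> Hh H; have := Imull H Hh; rewrite emulDr emulNr; exact: id.
Qed.
Lemma eqA_mulr h f g : inCQ s t h -> f === g -> emul t f h === emul t g h.
Proof.
move=> Hh H; have := Imulr H Hh; rewrite emulDl emulNl; exact: id.
Qed.
Lemma eqA_ptl f f' g : (forall p, f p = f' p) -> f' === g -> f === g.
Proof. by move=> H; apply: eqA_trans; apply: eqA_pt. Qed.
Lemma eqA_ptr f g g' : (forall p, g p = g' p) -> f === g' -> f === g.
Proof. by move=> H H1; apply: eqA_trans H1 _; apply: eqA_pt => p; rewrite H. Qed.

Section Der.
Variable D : elt V Ar -> elt V Ar.
Hypothesis HD : DerE s t I D.

Lemma Der_in f : inCQ s t f -> inCQ s t (D f). Proof. by case: HD => H _ _; apply: H. Qed.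
Lemma Der_compat f g : inCQ s t f -> inCQ s t g -> f === g -> D f === D g.
Proof. by case: HD => _ H _; apply: H. Qed.
Lemma Der_add f g : inCQ s t f -> inCQ s t g -> D (eadd f g) === eadd (D f) (D g).
Proof. by case: HD => _ _ [H _ _ _]; apply: H. Qed.
Lemma Der_scale c f : inCQ s t f -> D (escale c f) === escale c (D f).
Proof. by case: HD => _ _ [_ H _ _]; apply: H. Qed.
Lemma Der_leib f g : inCQ s t f -> inCQ s t g ->
  D (emul t f g) === eadd (emul t (D f) g) (emul t f (D g)).
Proof. by case: HD => _ _ [_ _ H _]; apply: H. Qed.
Lemma Der_vx v : D (evx v) === ezero.
Proof. by case: HD => _ _ [_ _ _ H]; apply: H. Qed.

Lemma Der_ptarg f g : (forall p, f p = g p) -> D f = D g.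
Proof. by move=> /efun ->. Qed.

Lemma Der_zero : D ezero === ezero.
Proof.
have H := Der_add inCQ0 inCQ0.
rewrite (@Der_ptarg (eadd ezero ezero) ezero) in H; last by move=> p; rewrite /eadd /ezero addr0.
have := IN H; move=> H2; apply: Ipt H2 _ => p.
rewrite /eadd /eopp /ezero; ring.
Qed.
Lemma Der_opp f : inCQ s t f -> D (eopp f) === eopp (D f).
Proof.
move=> Hf; rewrite (@Der_ptarg (eopp f) (escale (-1) f)); last by move=> p; rewrite /escale /eopp mulN1r.
apply: eqA_trans (Der_scale _ Hf) _; apply: eqA_pt => p; by rewrite /escale /eopp mulN1r.
Qed.
Lemma Der_sub f g : inCQ s t f -> inCQ s t g ->
  D (eadd f (eopp g)) === eadd (D f) (eopp (D g)).
Proof.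
move=> Hf Hg; apply: eqA_trans (Der_add Hf (inCQN Hg)) _.
apply: eqA_add; [exact: eqA_refl | exact: Der_opp].
Qed.
Lemma Der_sum (T : Type) (r : seq T) (F : T -> elt V Ar) :
  (forall i, inCQ s t (F i)) ->
  D (\big[eadd/ezero]_(i <- r) F i) === \big[eadd/ezero]_(i <- r) D (F i).
Proof.
move=> HF; elim: r => [|i r IH]; first by rewrite !big_nil; exact: Der_zero.
rewrite !big_cons; apply: eqA_trans (Der_add (HF i) _) _.
  elim: r {IH} => [|j r IHr]; rewrite ?big_nil ?big_cons //; exact: inCQD.
apply: eqA_add => //; exact: eqA_refl.
Qed.
End Der.

Lemma inCQ_sum (T : Type) (r : seq T) (F : T -> elt V Ar) :
  (forall i, inCQ s t (F i)) -> inCQ s t (\big[eadd/ezero]_(i <- r) F i).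
Proof. move=> HF; elim: r => [|j r IHr]; rewrite ?big_nil ?big_cons //; exact: inCQD. Qed.

Lemma esumE (T : Type) (r : seq T) (F : T -> elt V Ar) p :
  (\big[eadd/ezero]_(i <- r) F i) p = \sum_(i <- r) F i p.
Proof. by elim: r => [|i r IH]; rewrite ?big_nil ?big_cons // /eadd IH. Qed.

End Ideal.

Section DerClos.
Variables (V Ar : finType) (s t : Ar -> V) (S : elt V Ar -> Prop).
Implicit Types (f g h x y : elt V Ar) (p : qpath V Ar).
Local Notation I := (ideal_gen s t S).
Local Notation "f === g" := (eqA I f g) (at level 70).
Local Notation DerE := (DerE s t I).
Local Notation Inner := (Inner s t I).
Local Notation hheq := (hheq s t I).

Lemma DerE_ext D D' : DerE D ->
  (forall f, inCQ s t f -> forall p, D f p = D' f p) -> DerE D'.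
Proof.
move=> HD E.
have E' : forall f, inCQ s t f -> D f = D' f by move=> f Hf; apply: efun; apply: E.
split.
- by move=> f Hf; rewrite -(E' f Hf); exact: (Der_in HD).
- move=> f g Hf Hg Hfg; rewrite -(E' f Hf) -(E' g Hg); exact: (Der_compat HD).
split.
- move=> f g Hf Hg; rewrite -(E' f Hf) -(E' g Hg) -(E' _ (inCQD Hf Hg)); exact: (Der_add HD).
- move=> c f Hf; rewrite -(E' f Hf) -(E' _ (inCQZ c Hf)); exact: (Der_scale HD).
- move=> f g Hf Hg; rewrite -(E' f Hf) -(E' g Hg) -(E' _ (inCQ_mul Hf Hg)); exact: (Der_leib HD).
- move=> v; rewrite -(E' _ (@inCQ_evx _ _ s t v)); exact: (Der_vx HD).
Qed.

Lemma DerE_lin D D' c c' : DerE D -> DerE D' ->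
  DerE (fun f => eadd (escale c (D f)) (escale c' (D' f))).
Proof.
move=> HD HD'; split.
- by move=> f Hf; apply: inCQD; apply: inCQZ; [apply: (Der_in HD) | apply: (Der_in HD')].
- by move=> f g Hf Hg Hfg; apply: eqA_add; apply: eqA_scale; [apply: (Der_compat HD) | apply: (Der_compat HD')].
split.
- move=> f g Hf Hg.
  apply: eqA_trans (eqA_add (eqA_scale c (Der_add HD Hf Hg)) (eqA_scale c' (Der_add HD' Hf Hg))) _.
  apply: eqA_pt => p; rewrite /eadd /escale; ring.
- move=> e f Hf.
  apply: eqA_trans (eqA_add (eqA_scale c (Der_scale HD e Hf)) (eqA_scale c' (Der_scale HD' e Hf))) _.
  apply: eqA_pt => p; rewrite /eadd /escale; ring.
- move=> f g Hf Hg.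
  apply: eqA_trans (eqA_add (eqA_scale c (Der_leib HD Hf Hg)) (eqA_scale c' (Der_leib HD' Hf Hg))) _.
  rewrite emulDl emulDr !emulZl !emulZr.
  apply: eqA_pt => p; rewrite /eadd /escale; ring.
- move=> v; apply: eqA_trans (eqA_add (eqA_scale c (Der_vx HD v)) (eqA_scale c' (Der_vx HD' v))) _.
  apply: eqA_pt => p; rewrite /eadd /escale /ezero; ring.
Qed.

Lemma DerE_add D D' : DerE D -> DerE D' -> DerE (dadd D D').
Proof.
move=> HD HD'; apply: DerE_ext (DerE_lin 1 1 HD HD') _ => f _ p.
by rewrite /dadd /eadd /escale !mul1r.
Qed.
Lemma DerE_scale c D : DerE D -> DerE (dscale c D).
Proof.
move=> HD; apply: DerE_ext (DerE_lin c 0 HD HD) _ => f _ p.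
by rewrite /dscale /eadd /escale mul0r addr0.
Qed.
Lemma DerE_sub D D' : DerE D -> DerE D' -> DerE (fun f => eadd (D f) (eopp (D' f))).
Proof.
move=> HD HD'; apply: DerE_ext (DerE_lin 1 (-1) HD HD') _ => f _ p.
by rewrite /eadd /eopp /escale mul1r mulN1r.
Qed.

Lemma Der_comp D D' f g : DerE D -> DerE D' -> inCQ s t f -> inCQ s t g ->
  D' f === g -> D (D' f) === D g.
Proof. by move=> HD HD' Hf Hg H; apply: (Der_compat HD) => //; apply: (Der_in HD'). Qed.

Lemma DerE_br D D' : DerE D -> DerE D' -> DerE (dbr D D').
Proof.
move=> HD HD'; rewrite /dbr; split.
- move=> f Hf; apply: inCQD; [|apply: inCQN].
    by apply: (Der_in HD); apply: (Der_in HD').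
  by apply: (Der_in HD'); apply: (Der_in HD).
- move=> f g Hf Hg Hfg; apply: eqA_add; [|apply: eqA_opp].
    apply: (Der_compat HD); try exact: (Der_in HD').
    exact: (Der_compat HD').
  apply: (Der_compat HD'); try exact: (Der_in HD).
  exact: (Der_compat HD).
split.
- move=> f g Hf Hg.
  have H1 : D (D' (eadd f g)) === eadd (D (D' f)) (D (D' g)).
    apply: eqA_trans (Der_comp HD HD' (inCQD Hf Hg) _ (Der_add HD' Hf Hg)) _.
      by apply: inCQD; apply: (Der_in HD').
    by apply: (Der_add HD); apply: (Der_in HD').
  have H2 : D' (D (eadd f g)) === eadd (D' (D f)) (D' (D g)).
    apply: eqA_trans (Der_comp HD' HD (inCQD Hf Hg) _ (Der_add HD Hf Hg)) _.
      by apply: inCQD; apply: (Der_in HD).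
    by apply: (Der_add HD'); apply: (Der_in HD).
  apply: eqA_trans (eqA_add H1 (eqA_opp H2)) _.
  apply: eqA_pt => p; rewrite /eadd /eopp; ring.
- move=> c f Hf.
  have H1 : D (D' (escale c f)) === escale c (D (D' f)).
    apply: eqA_trans (Der_comp HD HD' (inCQZ c Hf) _ (Der_scale HD' c Hf)) _.
      by apply: inCQZ; apply: (Der_in HD').
    by apply: (Der_scale HD); apply: (Der_in HD').
  have H2 : D' (D (escale c f)) === escale c (D' (D f)).
    apply: eqA_trans (Der_comp HD' HD (inCQZ c Hf) _ (Der_scale HD c Hf)) _.
      by apply: inCQZ; apply: (Der_in HD).
    by apply: (Der_scale HD'); apply: (Der_in HD).
  apply: eqA_trans (eqA_add H1 (eqA_opp H2)) _.
  apply: eqA_pt => p; rewrite /eadd /eopp /escale; ring.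
- move=> f g Hf Hg.
  have Hl : forall D D', DerE D -> DerE D' ->
    D (D' (emul t f g)) === eadd (eadd (emul t (D (D' f)) g) (emul t (D' f) (D g)))
                                 (eadd (emul t (D f) (D' g)) (emul t f (D (D' g)))).
    move=> E E' HE HE'.
    have Hi1 : inCQ s t (emul t (E' f) g) by apply: inCQ_mul => //; apply: (Der_in HE').
    have Hi2 : inCQ s t (emul t f (E' g)) by apply: inCQ_mul => //; apply: (Der_in HE').
    apply: eqA_trans (Der_comp HE HE' (inCQ_mul Hf Hg) (inCQD Hi1 Hi2) (Der_leib HE' Hf Hg)) _.
    apply: eqA_trans (Der_add HE Hi1 Hi2) _.
    by apply: eqA_add; apply: (Der_leib HE); try apply: (Der_in HE').
  apply: eqA_trans (eqA_add (Hl _ _ HD HD') (eqA_opp (Hl _ _ HD' HD))) _.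
  rewrite emulDl emulDr !emulNl !emulNr.
  apply: eqA_pt => p; rewrite /eadd /eopp; ring.
- move=> v.
  have H1 : forall D D', DerE D -> DerE D' -> D (D' (evx v)) === ezero.
    move=> E E' HE HE'; apply: eqA_trans (Der_comp HE HE' (@inCQ_evx _ _ s t v) (@inCQ0 _ _ s t) (Der_vx HE' v)) _.
    exact: (Der_zero HE).
  apply: eqA_trans (eqA_add (H1 _ _ HD HD') (eqA_opp (H1 _ _ HD' HD))) _.
  apply: eqA_pt => p; rewrite /eadd /eopp /ezero; ring.
Qed.

Lemma Inner_pt D : (forall f, inCQ s t f -> forall p, D f p = 0) -> Inner D.
Proof.
move=> H; exists ezero => // f Hf; rewrite emul0l emul0r.
by apply: eqA_pt => p; rewrite H // /eadd /eopp /ezero oppr0 addr0.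
Qed.
Lemma hheq_pt D D' : (forall f, inCQ s t f -> forall p, D f p = D' f p) -> hheq D D'.
Proof. by move=> H; apply: Inner_pt => f Hf p; rewrite /eadd /eopp H // subrr. Qed.
Lemma hheq_refl D : hheq D D.
Proof. exact: hheq_pt. Qed.
Lemma Inner_ext D D' : (forall f, inCQ s t f -> D f === D' f) -> Inner D -> Inner D'.
Proof.
move=> H [x Hx Hin]; exists x => // f Hf.
exact: eqA_trans (eqA_sym (H f Hf)) (Hin f Hf).
Qed.
Lemma Inner_addf D D' : Inner D -> Inner D' -> Inner (fun f => eadd (D f) (D' f)).
Proof.
move=> [x Hx H] [y Hy H']; exists (eadd x y); first exact: inCQD.
move=> f Hf; apply: eqA_trans (eqA_add (H f Hf) (H' f Hf)) _.
rewrite emulDl emulDr; apply: eqA_pt => p; rewrite /eadd /eopp; ring.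
Qed.
Lemma Inner_scalef c D : Inner D -> Inner (fun f => escale c (D f)).
Proof.
move=> [x Hx H]; exists (escale c x); first exact: inCQZ.
move=> f Hf; apply: eqA_trans (eqA_scale c (H f Hf)) _.
rewrite emulZl emulZr; apply: eqA_pt => p; rewrite /eadd /eopp /escale; ring.
Qed.
Lemma hheq_sym D D' : hheq D D' -> hheq D' D.
Proof.
move=> /(Inner_scalef (-1)); apply: Inner_ext => f _; apply: eqA_pt => p.
rewrite /eadd /eopp /escale; ring.
Qed.
Lemma hheq_trans D D' D'' : hheq D D' -> hheq D' D'' -> hheq D D''.
Proof.
move=> H1 H2; move: (Inner_addf H1 H2); apply: Inner_ext => f _; apply: eqA_pt => p.
rewrite /eadd /eopp; ring.
Qed.
Lemma hheq_add D D1 D' D1' : hheq D D1 -> hheq D' D1' -> hheq (dadd D D') (dadd D1 D1').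
Proof.
move=> H1 H2; move: (Inner_addf H1 H2); apply: Inner_ext => f _; apply: eqA_pt => p.
rewrite /dadd /eadd /eopp; ring.
Qed.
Lemma hheq_scale c D D1 : hheq D D1 -> hheq (dscale c D) (dscale c D1).
Proof.
move=> /(Inner_scalef c); apply: Inner_ext => f _; apply: eqA_pt => p.
rewrite /dscale /eadd /eopp /escale; ring.
Qed.

Lemma Inner_br D E : DerE D -> DerE E -> Inner E -> Inner (dbr D E).
Proof.
move=> HD HE [x Hx H]; exists (D x); first exact: (Der_in HD).
move=> f Hf; rewrite /dbr.
have Hxf : inCQ s t (emul t x f) by exact: inCQ_mul.
have Hfx : inCQ s t (emul t f x) by exact: inCQ_mul.
have H1 : D (E f) === eadd (eadd (emul t (D x) f) (emul t x (D f)))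
                           (eopp (eadd (emul t (D f) x) (emul t f (D x)))).
  apply: eqA_trans (Der_comp HD HE Hf (inCQD Hxf (inCQN Hfx)) (H f Hf)) _.
  apply: eqA_trans (Der_sub HD Hxf Hfx) _.
  by apply: eqA_add; [|apply: eqA_opp]; apply: (Der_leib HD).
apply: eqA_trans (eqA_add H1 (eqA_opp (H (D f) (Der_in HD Hf)))) _.
apply: eqA_pt => p; rewrite /eadd /eopp; ring.
Qed.

Lemma hheq_br_l D D1 D' : DerE D -> DerE D1 -> DerE D' ->
  hheq D D1 -> hheq (dbr D D') (dbr D1 D').
Proof.
move=> HD HD1 HD' H.
have HE := DerE_sub HD HD1.
move: (Inner_scalef (-1) (Inner_br HD' HE H)); apply: Inner_ext => f Hf.
rewrite /dbr.
apply: eqA_trans (eqA_scale _ (eqA_add (Der_sub HD' (Der_in HD Hf) (Der_in HD1 Hf)) (@eqA_refl _ _ s t S _))) _.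
apply: eqA_pt => p; rewrite /eadd /eopp /escale; ring.
Qed.

Lemma hheq_br_r D D' D1' : DerE D -> DerE D' -> DerE D1' ->
  hheq D' D1' -> hheq (dbr D D') (dbr D D1').
Proof.
move=> HD HD' HD1 H; move: (Inner_scalef (-1) (hheq_br_l HD' HD1 HD H)).
apply: Inner_ext => f _; apply: eqA_pt => p; rewrite /dbr /eadd /eopp /escale; ring.
Qed.

Lemma hheq_br D D1 D' D1' : DerE D -> DerE D1 -> DerE D' -> DerE D1' ->
  hheq D D1 -> hheq D' D1' -> hheq (dbr D D') (dbr D1 D1').
Proof.
move=> HD HD1 HD' HD1' H1 H2; apply: hheq_trans (hheq_br_l HD HD1 HD' H1) _.
exact: hheq_br_r.
Qed.

End DerClos.

Section Determined.
Variables (V Ar : finType) (s t : Ar -> V) (S : elt V Ar -> Prop).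
Implicit Types (f g h x y : elt V Ar) (p : qpath V Ar).
Local Notation I := (ideal_gen s t S).
Local Notation "f === g" := (eqA I f g) (at level 70).
Local Notation DerE := (DerE s t I).
Local Notation Inner := (Inner s t I).
Local Notation hheq := (hheq s t I).

Lemma emul_earr_l b g v l : emul t (earr s b) g (v, l) =
  if l is c :: l' then (if (s b == v) && (b == c) then g (t b, l') else 0) else 0.
Proof.
case: l => [|c l].
  by rewrite /emul big_ord_recl big_ord0 /= /earr /edelta /= xpair_eqE andbF mul0r addr0.
rewrite /emul big_ord_recl big_ord_recl /= big1 ?addr0.
  rewrite /earr /edelta /= xpair_eqE andbF mul0r add0r.
  rewrite add0n take0 drop0 xpair_eqE eqseq_cons eqxx andbT [v == _]eq_sym [c == _]eq_sym /=.
  by case: andP => [[/eqP Hv /eqP Hc]|]; rewrite ?mul1r ?mul0r // -Hc.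
move=> k _; rewrite /earr /edelta /= add0n.
rewrite xpair_eqE /= eqseq_cons.
have -> : (take (bump 0 k) l == [::]) = false.
  by apply/negbTE; rewrite -size_eq0 size_takel // /bump /=; exact: ltn_ord.
by rewrite !andbF mul0r.
Qed.

Lemma eqA_sum0 (T : Type) (r : seq T) (F : T -> elt V Ar) :
  (forall i, F i === ezero) -> \big[eadd/ezero]_(i <- r) F i === ezero.
Proof.
move=> H; elim: r => [|i r IH]; first by rewrite big_nil; exact: eqA_refl.
rewrite big_cons; apply: eqA_trans (eqA_add (H i) IH) _.
by apply: eqA_pt => p; rewrite /eadd /ezero addr0.
Qed.

Variable E : elt V Ar -> elt V Ar.
Hypothesis HE : DerE E.
Hypothesis Harr : forall b, E (earr s b) === ezero.

Lemma det_bounded n : forall f, inCQ s t f ->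
  (forall p, (n <= size p.2)%N -> f p = 0) -> E f === ezero.
Proof.
elim: n => [|n IH] f Hf Hn.
  rewrite (@Der_ptarg _ _ _ f ezero); last by move=> p; rewrite Hn.
  exact: (Der_zero HE).
pose f0 : elt V Ar := \big[eadd/ezero]_(v <- enum V) escale (f (v, [::])) (@evx V Ar v).
pose g := fun b => (fun q : qpath V Ar => if q.1 == t b then f (s b, b :: q.2) else 0) : elt V Ar.
have Hg : forall b, inCQ s t (g b).
  move=> b [v l] /= Hp; rewrite /g /=; case: eqP => // Ev.
  by rewrite Hf // pvalid_cons eqxx /= -Ev.
have Hgn : forall b p, (n <= size p.2)%N -> g b p = 0.
  by move=> b p Hp; rewrite /g; case: ifP => // _; rewrite Hn.
have Hf0 : inCQ s t f0 by apply: inCQ_sum => v; apply: inCQZ; apply: inCQ_evx.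
have Hterm : forall b, inCQ s t (emul t (earr s b) (g b)).
  by move=> b; apply: inCQ_mul => //; apply: inCQ_earr.
have Hsum : inCQ s t (\big[eadd/ezero]_(b <- enum Ar) emul t (earr s b) (g b)).
  by apply: inCQ_sum.
have Hdec : f = eadd f0 (\big[eadd/ezero]_(b <- enum Ar) emul t (earr s b) (g b)).
  apply: efun => -[v l]; rewrite /eadd /f0 !esumE.
  case: l => [|c l].
    rewrite [X in _ + X]big1 ?addr0; last by move=> b _; rewrite emul_earr_l.
    rewrite (bigD1_seq v) ?mem_enum ?enum_uniq //= big1_seq ?addr0.
      by rewrite /escale /evx /edelta eqxx mulr1.
    by move=> u /andP [Hu _]; rewrite /escale /evx /edelta xpair_eqE andbT eq_sym (negbTE Hu) mulr0.
  rewrite [X in X + _]big1_seq ?add0r; last first.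
    by move=> u _; rewrite /escale /evx /edelta xpair_eqE andbF mulr0.
  rewrite (bigD1_seq c) ?mem_enum ?enum_uniq //= big1_seq ?addr0.
    rewrite emul_earr_l eqxx andbT /g /= eqxx.
    case: eqP => [->//|Hv]; rewrite Hf // pvalid_cons; apply/negP => /andP [/eqP ? _]; exact: Hv.
  move=> b /andP [Hb _]; rewrite emul_earr_l.
  by rewrite (negbTE Hb) andbF.
rewrite Hdec; apply: eqA_trans (Der_add HE Hf0 Hsum) _.
apply: eqA_trans (eqA_add (Der_sum HE _ _) (Der_sum HE _ _)) _.
- by move=> v; apply: inCQZ; apply: inCQ_evx.
- exact: Hterm.
apply: (eqA_trans (g := eadd ezero ezero)); last first.
  by apply: eqA_pt => p; rewrite /eadd /ezero addr0.
apply: eqA_add; apply: eqA_sum0.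
- move=> v; apply: eqA_trans (Der_scale HE _ (@inCQ_evx _ _ s t v)) _.
  apply: eqA_trans (eqA_scale _ (Der_vx HE v)) _.
  by apply: eqA_pt => p; rewrite /escale /ezero mulr0.
- move=> b; apply: eqA_trans (Der_leib HE (@inCQ_earr _ _ s t b) (Hg b)) _.
  apply: eqA_trans (eqA_add (eqA_mulr (Hg b) (Harr b)) (eqA_mull (@inCQ_earr _ _ s t b) (IH _ (Hg b) _))) _.
    by move=> p Hp; apply: Hgn.
  by rewrite emul0l emul0r; apply: eqA_pt => p; rewrite /eadd /ezero addr0.
Qed.

Lemma det_all : (exists m, forall f, inCQ s t f -> inRpow m f -> I f) ->
  forall f, inCQ s t f -> E f === ezero.
Proof.
move=> [m Hm] f Hf.
pose fl := (fun p => if (size p.2 < m)%N then f p else 0) : elt V Ar.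
have Hfl : inCQ s t fl by move=> p Hp; rewrite /fl Hf //; case: ifP.
have H1 : f === fl.
  apply: Hm.
    by apply: inCQD => //; apply: inCQN.
  by move=> p Hp; rewrite /eadd /eopp /fl Hp subrr.
apply: eqA_trans (Der_compat HE Hf Hfl H1) _.
apply: (det_bounded (n := m)) => // p Hp.
by rewrite /fl ltnNge Hp.
Qed.
End Determined.

Lemma hheq_arrows (V Ar : finType) (s t : Ar -> V) (S : elt V Ar -> Prop) D D' :
  (exists m, forall f, inCQ s t f -> inRpow m f -> ideal_gen s t S f) ->
  DerE s t (ideal_gen s t S) D -> DerE s t (ideal_gen s t S) D' ->
  (forall b, eqA (ideal_gen s t S) (D (earr s b)) (D' (earr s b))) ->
  hheq s t (ideal_gen s t S) D D'.
Proof.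
move=> Hm HD HD' Hb.
have HE := DerE_sub HD HD'.
have Harr : forall b, eqA (ideal_gen s t S) ((fun f => eadd (D f) (eopp (D' f))) (earr s b)) ezero.
  move=> b; apply: Ipt (Hb b) _ => p; rewrite /eadd /eopp /ezero; ring.
have H := det_all HE Harr Hm.
exists ezero => // f Hf; rewrite emul0l emul0r.
apply: eqA_trans (H f Hf) _; apply: eqA_pt => p; rewrite /eadd /eopp /ezero; ring.
Qed.

Lemma sum_deltal (a : nat) (i : 'I_a) (X : 'I_a -> CC) :
  \sum_(k < a) (if k == i then X k else 0) = X i.
Proof. by rewrite (bigD1 i) //= eqxx big1 ?addr0 // => k /negbTE ->. Qed.
Lemma sum_deltar (a : nat) (i : 'I_a) (X : 'I_a -> CC) :
  \sum_(k < a) (if i == k then X k else 0) = X i.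
Proof. by rewrite -[RHS](sum_deltal i); apply: eq_bigr => k _; rewrite eq_sym. Qed.

Definition DA (V Ar : finType) (o : V) (a : nat) (alpha : 'I_a -> Ar)
  (N : 'I_a -> 'I_a -> CC) (f : elt V Ar) : elt V Ar :=
  fun p => \sum_(q < a) (if p == (o, [:: alpha q]) then \sum_(i < a) f (o, [:: alpha i]) * N i q else 0).

Section DAsec.
Variables (V Ar : finType) (s t : Ar -> V) (S : elt V Ar -> Prop) (o w : V) (a : nat) (alpha : 'I_a -> Ar).
Hypotheses (Hs : forall q, s (alpha q) = o) (Ht : forall q, t (alpha q) = w)
  (Hno : forall b, t b != o) (Hnw : forall b, s b != w) (Hinj : injective alpha)
  (HI2 : forall f, ideal_gen s t S f -> inRpow 2 f).
Implicit Types (f g h x y : elt V Ar) (p : qpath V Ar) (N : 'I_a -> 'I_a -> CC).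
Local Notation I := (ideal_gen s t S).
Local Notation "f === g" := (eqA I f g) (at level 70).
Local Notation DA := (DA o alpha).

Lemma path_alpha_eq i j : ((o, [:: alpha i]) == (o, [:: alpha j]) :> qpath V Ar) = (i == j).
Proof. by rewrite xpair_eqE eqxx /= eqseq_cons andbT (inj_eq Hinj). Qed.

Lemma earr_at b i : earr s b (o, [:: alpha i]) = if alpha i == b then 1 else 0.
Proof.
rewrite /earr /edelta xpair_eqE /= eqseq_cons andbT.
case: (alpha i =P b) => [E|]; last by rewrite andbF.
by rewrite -E Hs eqxx.
Qed.

Lemma DA_at N f j : DA N f (o, [:: alpha j]) = \sum_(i < a) f (o, [:: alpha i]) * N i j.
Proof.
rewrite /DA (bigD1 j) //= eqxx [X in _ + X]big1 ?addr0 // => q Hq.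
by rewrite path_alpha_eq eq_sym (negbTE Hq).
Qed.

Lemma DA_sum N f : DA N f = \big[eadd/ezero]_(q <- index_enum 'I_a)
   escale (\sum_(i < a) f (o, [:: alpha i]) * N i q) (earr s (alpha q)).
Proof.
apply: efun => p; rewrite esumE /DA; apply: eq_bigr => q _.
rewrite /escale /earr /edelta Hs; case: ifP; by rewrite ?mulr1 ?mulr0.
Qed.

Lemma inCQ_DA N f : inCQ s t (DA N f).
Proof.
move=> p Hp; rewrite /DA big1 // => q _; case: eqP => // E.
by move: Hp; rewrite E /pvalid /= Hs eqxx.
Qed.

Lemma DA_dep N f g : (forall i, f (o, [:: alpha i]) = g (o, [:: alpha i])) -> DA N f = DA N g.
Proof.
move=> H; apply: efun => p; rewrite /DA; apply: eq_bigr => q _.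
by under eq_bigr do rewrite H.
Qed.

Lemma emul_suml (T : Type) (r : seq T) (F : T -> elt V Ar) g :
  emul t (\big[eadd/ezero]_(i <- r) F i) g = \big[eadd/ezero]_(i <- r) emul t (F i) g.
Proof. by elim: r => [|i r IH]; rewrite ?big_nil ?big_cons ?emul0l // emulDl IH. Qed.
Lemma emul_sumr (T : Type) (r : seq T) (F : T -> elt V Ar) g :
  emul t g (\big[eadd/ezero]_(i <- r) F i) = \big[eadd/ezero]_(i <- r) emul t g (F i).
Proof. by elim: r => [|i r IH]; rewrite ?big_nil ?big_cons ?emul0r // emulDr IH. Qed.

Lemma emul_earr_w q g p : inCQ s t g ->
  emul t (earr s (alpha q)) g p = if p == (o, [:: alpha q]) then g (w, [::]) else 0.
Proof.
move=> Hg; case: p => v l; rewrite emul_earr_l Hs Ht.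
case: l => [|c l]; first by rewrite xpair_eqE andbF.
rewrite xpair_eqE /= eqseq_cons [v == o]eq_sym [c == _]eq_sym.
case: (o == v) => //=; case: (alpha q == c) => //=.
case: l => [|c' l] //=.
by rewrite Hg // pvalid_cons (negbTE (Hnw c')).
Qed.

Lemma ptgt_cons_neq v c l : ptgt t (v, c :: l) != o.
Proof. by rewrite /ptgt /= last_map; exact: Hno. Qed.

Lemma emul_earr_o q f p :
  emul t f (earr s (alpha q)) p = if p == (o, [:: alpha q]) then f (o, [::]) else 0.
Proof.
case: p => v l; rewrite /emul big_ord_recl /= take0 drop0 big1 ?addr0.
  rewrite /earr /edelta Hs /ptgt /=; case: eqP => [[-> _]|]; by rewrite ?mulr1 ?mulr0.
move=> k _; rewrite /earr /edelta Hs.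
have Hk : (bump 0 k < (size l).+1)%N by rewrite /bump /=; exact: ltn_ord.
case El: (take (bump 0 k) l) => [|c l'].
  by move: (congr1 size El); rewrite size_takel.
rewrite xpair_eqE (negbTE (ptgt_cons_neq _ _ _)) /= mulr0 //.
Qed.

Lemma DerE_DA N : DerE s t I (DA N).
Proof.
split.
- move=> f _; exact: inCQ_DA.
- move=> f g Hf Hg Hfg; apply: eqA_pt => p; congr (_ p); apply: DA_dep => i.
  have := HI2 Hfg (p := (o, [:: alpha i])) isT; rewrite /eadd /eopp => /eqP.
  by rewrite subr_eq0 => /eqP.
split.
- move=> f g Hf Hg; apply: eqA_pt => p; rewrite /DA /eadd -big_split; apply: eq_bigr => q _ /=.
  case: ifP => _; rewrite ?addr0 // -big_split; apply: eq_bigr => i _ /=; exact: mulrDl.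
- move=> c f Hf; apply: eqA_pt => p; rewrite /DA /escale mulr_sumr; apply: eq_bigr => q _ /=.
  case: ifP => _; rewrite ?mulr0 // mulr_sumr; apply: eq_bigr => i _ /=; by rewrite mulrA.
- move=> f g Hf Hg; apply: eqA_pt => p.
  rewrite (DA_sum N f) (DA_sum N g) emul_suml emul_sumr /eadd !esumE /DA -big_split.
  apply: eq_bigr => q _ /=.
  rewrite emulZl emulZr /escale emul_earr_w // emul_earr_o.
  case: ifP => _; rewrite ?mulr0 ?addr0 //.
  rewrite mulr_suml mulr_suml -big_split; apply: eq_bigr => i _ /=.
  rewrite emul1 Ht; ring.
- move=> v; apply: eqA_pt => p; rewrite /DA /ezero big1 // => q _.
  case: ifP => // _; rewrite big1 // => i _.
  by rewrite /evx /edelta xpair_eqE andbF mul0r.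
Qed.

Lemma DA_earr N b p : DA N (earr s b) p =
  \sum_(q < a) (if p == (o, [:: alpha q]) then \sum_(i < a) (if alpha i == b then N i q else 0) else 0).
Proof.
rewrite /DA; apply: eq_bigr => q _; case: ifP => // _; apply: eq_bigr => i _.
by rewrite earr_at; case: ifP; rewrite ?mul1r ?mul0r.
Qed.

Lemma DA_earr_alpha N k p : DA N (earr s (alpha k)) p =
  \sum_(q < a) (if p == (o, [:: alpha q]) then N k q else 0).
Proof.
rewrite DA_earr; apply: eq_bigr => q _; case: ifP => // _.
rewrite -[RHS](sum_deltal k (fun i => N i q)); apply: eq_bigr => i _.
by rewrite (inj_eq Hinj).
Qed.

Lemma DA_earr_other N b p : b \notin codom alpha -> DA N (earr s b) p = 0.
Proof.
move=> Hb; rewrite DA_earr big1 // => q _; case: ifP => // _; rewrite big1 // => i _.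
case: eqP => // E; exfalso; move/negP: Hb; apply; rewrite -E; exact: codom_f.
Qed.

Lemma DA_def N f p : DA N f p = \sum_(q < a) (if p == (o, [:: alpha q]) then \sum_(i < a) f (o, [:: alpha i]) * N i q else 0).
Proof. by []. Qed.

Lemma DA_comp N N' f p : DA N (DA N' f) p = DA (fun i q => \sum_(k < a) N' i k * N k q) f p.
Proof.
rewrite DA_def [RHS]DA_def; apply: eq_bigr => q _; case: ifP => // _.
under eq_bigr do rewrite DA_at.
under eq_bigr do rewrite mulr_suml.
rewrite exchange_big /=; apply: eq_bigr => k _; rewrite mulr_sumr; apply: eq_bigr => i _.
by rewrite mulrA.
Qed.

Lemma DA_lin N N' c c' f p : DA (fun i j => c * N i j + c' * N' i j) f p = c * DA N f p + c' * DA N' f p.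
Proof.
rewrite /DA !mulr_sumr -big_split; apply: eq_bigr => q _ /=; case: ifP => _; rewrite ?mulr0 ?addr0 //.
rewrite !mulr_sumr -big_split; apply: eq_bigr => i _ /=; ring.
Qed.

Lemma DA_ext N N' f p : (forall i j, N i j = N' i j) -> DA N f p = DA N' f p.
Proof.
move=> H; rewrite /DA; apply: eq_bigr => q _; case: ifP => // _; apply: eq_bigr => i _; by rewrite H.
Qed.

Lemma DA_inner N : Inner s t I (DA N) -> exists c, forall i j, N i j = if i == j then c else 0.
Proof.
move=> [x Hx H]; exists (x (o, [::]) - x (w, [::])) => i j.
have := HI2 (H _ (@inCQ_earr _ _ s t (alpha i))) (p := (o, [:: alpha j])) isT.
rewrite /eadd /eopp DA_earr_alpha (bigD1 j) //= path_alpha_eq eqxx big1 ?addr0; last first.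
  by move=> q Hq; rewrite path_alpha_eq eq_sym (negbTE Hq).
rewrite !emul1 !earr_at Ht (inj_eq Hinj).
have -> : earr s (alpha i) (w, [::]) = 0 by rewrite /earr /edelta xpair_eqE andbF.
have -> : earr s (alpha i) (o, [::]) = 0 by rewrite /earr /edelta xpair_eqE andbF.
rewrite [j == i]eq_sym; case: (i == j) => /eqP; rewrite subr_eq0 => /eqP ->; ring.
Qed.

End DAsec.

Lemma eqA_sum (V Ar : finType) (s t : Ar -> V) (S : elt V Ar -> Prop) (T : Type) (r : seq T) (F G : T -> elt V Ar) :
  (forall i, eqA (ideal_gen s t S) (F i) (G i)) ->
  eqA (ideal_gen s t S) (\big[eadd/ezero]_(i <- r) F i) (\big[eadd/ezero]_(i <- r) G i).
Proof.
move=> H; elim: r => [|i r IH]; first by rewrite !big_nil; exact: eqA_refl.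
by rewrite !big_cons; apply: eqA_add.
Qed.

Section Kron.
Variable a : nat.
Local Notation ks := (kron_s a).
Local Notation kt := (kron_t a).
Local Notation KI := (kron_I a).
Local Notation E := (elt bool 'I_a).
Implicit Types (f g h x y : E) (p : qpath bool 'I_a).

Lemma KI_zero h : KI h -> forall p, h p = 0.
Proof. by elim=> [//|f g _ H1 _ H2|//] p; rewrite /eadd H1 H2 addr0. Qed.
Lemma eqK f g : eqA KI f g -> forall p, f p = g p.
Proof. by move=> /KI_zero H p; move: (H p); rewrite /eadd /eopp => /eqP; rewrite subr_eq0 => /eqP. Qed.
Lemma KI2 f : KI f -> inRpow 2 f.
Proof. by move=> /KI_zero H p _; apply: H. Qed.
Lemma kron_long v i j l : pvalid ks kt (v, i :: j :: l) = false.
Proof. by rewrite !pvalid_cons /= andbF. Qed.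
Lemma Kadm : exists m, forall f, inCQ ks kt f -> inRpow m f -> KI f.
Proof.
exists 2%N => f Hf Hr; apply: I0 => -[v l].
case: l => [|i [|j l]]; try by apply: Hr.
by apply: Hf; rewrite kron_long.
Qed.

Definition DAK (N : 'I_a -> 'I_a -> CC) := DA false (fun i : 'I_a => i) N.
Lemma DerE_DAK N : DerE ks kt KI (DAK N).
Proof. apply: (@DerE_DA _ _ ks kt _ false true) => //; exact: KI2. Qed.

Definition matK (D : E -> E) (i j : 'I_a) : CC := D (earr ks i) (false, [:: j]).

Lemma DAK_earr N i p : DAK N (earr ks i) p = \sum_(q < a) (if p == (false, [:: q]) then N i q else 0).
Proof. by rewrite /DAK (@DA_earr_alpha _ _ ks). Qed.

Lemma matK_DAK N i j : matK (DAK N) i j = N i j.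
Proof.
rewrite /matK DAK_earr (bigD1 j) //= eqxx [X in _ + X]big1 ?addr0 // => q Hq.
by rewrite xpair_eqE /= eqseq_cons andbT eq_sym (negbTE Hq).
Qed.

Section KD.
Variable D : E -> E.
Hypothesis HD : DerE ks kt KI D.

Lemma Kzero_sum v l (F : 'I_a -> CC) : (forall q, (v, l) != (false, [:: q])) ->
  \sum_(q < a) (if (v, l) == (false, [:: q]) then F q else 0) = 0.
Proof. by move=> H; rewrite big1 // => q _; rewrite (negbTE (H q)). Qed.

Lemma Kstep3 i p : D (earr ks i) p = \sum_(q < a) (if p == (false, [:: q]) then matK D i q else 0).
Proof.
have Ha := @inCQ_earr _ _ ks kt i.
have Hg := Der_in HD Ha.
have E1 : earr ks i = emul kt (evx false) (earr ks i).
  apply: efun => p'; rewrite emul_evx_l /earr /edelta; case: eqP => [->|_] //=; by case: ifP.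
have E2 : earr ks i = emul kt (earr ks i) (evx true).
  apply: efun => p'; rewrite emul_evx_r /earr /edelta; case: eqP => [->|_] //=; by case: ifP.
have L1 : forall p, D (earr ks i) p = emul kt (evx false) (D (earr ks i)) p.
  apply: eqK; rewrite {1}E1; apply: (eqA_trans (Der_leib HD (@inCQ_evx _ _ ks kt false) Ha)).
  refine (eqA_trans (eqA_add (eqA_mulr Ha (Der_vx HD false)) (eqA_refl _ _ _ _)) _).
  by rewrite emul0l; apply: eqA_pt => p'; rewrite /eadd /ezero add0r.
have L2 : forall p, D (earr ks i) p = emul kt (D (earr ks i)) (evx true) p.
  apply: eqK; rewrite {1}E2; apply: (eqA_trans (Der_leib HD Ha (@inCQ_evx _ _ ks kt true))).
  apply: (eqA_trans (eqA_add (eqA_refl _ _ _ _) (eqA_mull Ha (Der_vx HD true)))).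
  by rewrite emul0r; apply: eqA_pt => p'; rewrite /eadd /ezero addr0.
case: p => [[] [|j [|k l]]].
- by rewrite L1 emul_evx_l /= big1.
- by rewrite Hg //= big1.
- by rewrite Hg ?kron_long //= big1.
- by rewrite L2 emul_evx_r /= big1.
- rewrite (bigD1 j) //= eqxx [X in _ + X]big1 ?addr0 // => q Hq.
  by rewrite xpair_eqE /= eqseq_cons andbT eq_sym (negbTE Hq).
- by rewrite Hg ?kron_long // Kzero_sum // => q; apply/eqP; case.
Qed.

Lemma Kform i : D (earr ks i) = \big[eadd/ezero]_(q <- index_enum 'I_a) escale (matK D i q) (earr ks q).
Proof.
apply: efun => p; rewrite esumE Kstep3; apply: eq_bigr => q _.
by rewrite /escale /earr /edelta; case: ifP; rewrite ?mulr1 ?mulr0.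
Qed.

Lemma Kapply (c : 'I_a -> CC) p :
  D (\big[eadd/ezero]_(q <- index_enum 'I_a) escale (c q) (earr ks q)) p = \sum_(q < a) c q * D (earr ks q) p.
Proof.
have H := @Der_sum _ _ _ _ _ _ HD _ (index_enum 'I_a) (fun q => escale (c q) (earr ks q)) (fun q => inCQZ (c q) (@inCQ_earr _ _ ks kt q)).
rewrite (eqK H) esumE; apply: eq_bigr => q _.
by rewrite (eqK (Der_scale HD (c q) (@inCQ_earr _ _ ks kt q))).
Qed.

End KD.

Lemma matK_br D D' i j : DerE ks kt KI D -> DerE ks kt KI D' ->
  matK (dbr D D') i j = \sum_(k < a) matK D' i k * matK D k j - \sum_(k < a) matK D i k * matK D' k j.
Proof.
move=> HD HD'.
have -> : matK (dbr D D') i j = D (D' (earr ks i)) (false, [:: j]) - D' (D (earr ks i)) (false, [:: j]) by [].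
by rewrite {1}(Kform HD' i) {1}(Kform HD i) (Kapply HD) (Kapply HD').
Qed.

Lemma Kinner_scalar D : Inner ks kt KI D -> exists c, forall i j, matK D i j = if i == j then c else 0.
Proof.
move=> [x Hx H]; exists (x (false, [::]) - x (true, [::])) => i j.
rewrite /matK (eqK (H _ (@inCQ_earr _ _ ks kt i))) /eadd /eopp !emul1.
have -> : earr ks i (true, [::]) = 0 by [].
have -> : earr ks i (false, [::]) = 0 by [].
have -> : earr ks i (false, [:: j]) = if i == j then 1 else 0.
  by rewrite /earr /edelta xpair_eqE /= eqseq_cons andbT eq_sym.
by case: (i == j); ring.
Qed.

Lemma Kinner_DAK c : Inner ks kt KI (DAK (fun i j => if i == j then c else 0)).
Proof.
exists (escale c (evx false)); first exact: inCQZ (inCQ_evx _).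
move=> f Hf; apply: eqA_pt => p.
rewrite /eadd /eopp emulZl emulZr /escale emul_evx_l emul_evx_r /ptgt /kron_t /=.
rewrite /DAK DA_def.
case: p => [[] [|j [|k l]]] /=.
all: try by rewrite big1 ?mulr0 ?subrr.
- by rewrite Hf ?kron_long // big1 // mulr0; case: ifP; rewrite ?mulr0 subrr.
- rewrite (bigD1 j) //= eqxx [X in _ + X]big1 ?addr0; last first.
    by move=> q Hq; rewrite xpair_eqE /= eqseq_cons andbT eq_sym (negbTE Hq).
  rewrite (bigD1 j) //= eqxx [X in _ + X]big1 ?addr0; last first.
    by move=> q Hq; rewrite (negbTE Hq) mulr0.
  ring.
- rewrite Hf ?kron_long // Kzero_sum; first by case: ifP; rewrite ?mulr0 subrr.
  by move=> q; apply/eqP; case.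
Qed.

Lemma Kinner_of_scalar D c : DerE ks kt KI D ->
  (forall i j, matK D i j = if i == j then c else 0) -> Inner ks kt KI D.
Proof.
move=> HD Hc.
have H1 : hheq ks kt KI D (DAK (fun i j => if i == j then c else 0)).
  apply: (hheq_arrows Kadm HD (DerE_DAK _)) => i.
  apply: eqA_pt => p; rewrite (Kstep3 HD) DAK_earr; apply: eq_bigr => q _; by rewrite Hc.
move: (Inner_addf H1 (Kinner_DAK c)); apply: Inner_ext => f _; apply: eqA_pt => p.
rewrite /eadd /eopp; ring.
Qed.

End Kron.

Lemma dsumE (V Ar : finType) (T : Type) (r : seq T) (F : T -> elt V Ar -> elt V Ar) f p :
  (\big[@dadd V Ar/@dzero V Ar]_(i <- r) F i) f p = \sum_(i <- r) F i f p.
Proof. by elim: r => [|i r IH]; rewrite ?big_nil ?big_cons // /dadd /eadd IH. Qed.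

Lemma lie_sum (V Ar : finType) (s t : Ar -> V) I G (T : Type) (r : seq T) (F : T -> elt V Ar -> elt V Ar) :
  (forall i, lie_gen s t I G (F i)) -> lie_gen s t I G (\big[@dadd V Ar/@dzero V Ar]_(i <- r) F i).
Proof.
move=> H; elim: r => [|i r IH]; rewrite ?big_nil ?big_cons; first exact: lg_zero.
exact: lg_add.
Qed.

Lemma DA_sumN (V Ar : finType) (o : V) (a : nat) (alpha : 'I_a -> Ar) (T : Type) (r : seq T)
   (c : T -> CC) (M : T -> 'I_a -> 'I_a -> CC) f p :
  DA o alpha (fun i j => \sum_(k <- r) c k * M k i j) f p = \sum_(k <- r) c k * DA o alpha (M k) f p.
Proof.
rewrite /DA; under [RHS]eq_bigr do rewrite mulr_sumr.
rewrite exchange_big /=; apply: eq_bigr => q _; case: ifP => _; last by rewrite big1 // => k _; rewrite mulr0.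
under [RHS]eq_bigr do rewrite mulr_sumr.
rewrite exchange_big /=; apply: eq_bigr => i _; rewrite mulr_sumr; apply: eq_bigr => k _; ring.
Qed.

Lemma sum_shift (a : nat) (X Y : 'I_a -> 'I_a -> CC) (x y : CC) i j :
  \sum_(k < a) (X i k - (if i == k then x else 0)) * (Y k j - (if k == j then y else 0)) =
  \sum_(k < a) X i k * Y k j - X i j * y - x * Y i j + (if i == j then x * y else 0).
Proof.
transitivity (\sum_(k < a) (X i k * Y k j - (if k == j then X i k * y else 0)
     - (if i == k then x * Y k j else 0) + (if i == k then (if k == j then x * y else 0) else 0))).
  by apply: eq_bigr => k _; case: (i == k); case: (k == j); ring.
rewrite big_split /= !sumrB sum_deltal sum_deltar; congr (_ + _).
by rewrite sum_deltar.
Qed.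

Section Main.
Variables (V Ar : finType) (s t : Ar -> V) (o w : V) (rels : elt V Ar -> Prop) (a : nat) (alpha : 'I_a -> Ar).
Hypotheses (Hs : forall q, s (alpha q) = o) (Ht : forall q, t (alpha q) = w)
  (Hno : forall b, t b != o) (Hnw : forall b, s b != w) (Hinj : injective alpha)
  (HI2 : forall f, ideal_gen s t rels f -> inRpow 2 f)
  (Hm : exists m, forall f, inCQ s t f -> inRpow m f -> ideal_gen s t rels f).
Local Notation I := (ideal_gen s t rels).
Local Notation DA := (DA o alpha).

Definition Gset (D : elt V Ar -> elt V Ar) : Prop :=
    (exists p q : 'I_a, p != q /\
       on_arrows s t I D (fun b => if b == alpha p then earr s (alpha q) else ezero))
    \/
    (exists j i1 : 'I_a, [/\ val i1 = 0%N, (0 < val j)%N &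
       on_arrows s t I D (fun b =>
         if b == alpha j then earr s (alpha j)
         else if b == alpha i1 then eopp (earr s (alpha i1)) else ezero)]).

Local Notation LG := (lie_gen s t I Gset).

Lemma DerE_DAm N : DerE s t I (DA N).
Proof. exact: DerE_DA. Qed.

Lemma DA_earr_sum N k x : DA N (earr s (alpha k)) x = \sum_(q < a) N k q * earr s (alpha q) x.
Proof.
rewrite (DA_earr_alpha Hs Hinj); apply: eq_bigr => q _.
by rewrite /earr /edelta Hs; case: ifP; rewrite ?mulr1 ?mulr0.
Qed.

Lemma hheq_on_arrows N D h : on_arrows s t I D h ->
  (forall b x, DA N (earr s b) x = h b x) -> hheq s t I (DA N) D.
Proof.
move=> [HD Hh] H; apply: (hheq_arrows Hm (DerE_DAm N) HD) => b.
apply: eqA_sym; apply: eqA_trans (Hh b) _; apply: eqA_pt => x; by rewrite H.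
Qed.

Definition Epq (p q : 'I_a) : 'I_a -> 'I_a -> CC := fun i j => if (i == p) && (j == q) then 1 else 0.
Definition Xj (j i1 : 'I_a) : 'I_a -> 'I_a -> CC :=
  fun i k => if i == k then (if i == j then 1 else if i == i1 then -1 else 0) else 0.

Lemma DA_Epq p q b x : DA (Epq p q) (earr s b) x = (if b == alpha p then earr s (alpha q) else ezero) x.
Proof.
case: (boolP (b \in codom alpha)) => Hb.
  case/codomP: Hb => k ->; rewrite DA_earr_sum (inj_eq Hinj) /Epq.
  case: (k =P p) => [_|_] /=.
    rewrite (bigD1 q) //= eqxx mul1r [X in _ + X]big1 ?addr0 // => q' /negbTE ->; by rewrite mul0r.
  by rewrite big1 // => q' _; rewrite mul0r.
rewrite (DA_earr_other Hs) //; case: eqP => // E; move/negP: Hb; case; rewrite E; exact: codom_f.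
Qed.

Lemma DA_Xj j i1 b x : j != i1 -> DA (Xj j i1) (earr s b) x =
  (if b == alpha j then earr s (alpha j)
   else if b == alpha i1 then eopp (earr s (alpha i1)) else ezero) x.
Proof.
move=> Hji; case: (boolP (b \in codom alpha)) => Hb.
  case/codomP: Hb => k ->; rewrite DA_earr_sum !(inj_eq Hinj) /Xj.
  rewrite (bigD1 k) //= eqxx [X in _ + X]big1 ?addr0; last by move=> q /negbTE; rewrite eq_sym => ->; rewrite mul0r.
  case: (k =P j) => [->|_]; first by rewrite mul1r.
  case: (k =P i1) => [->|_]; first by rewrite /eopp mulN1r.
  by rewrite mul0r.
rewrite (DA_earr_other Hs) //.
have Hn : forall k, (b == alpha k) = false.
  by move=> k; apply/negbTE; apply/eqP => E; move/negP: Hb; apply; rewrite E; exact: codom_f.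
by rewrite !Hn.
Qed.

Lemma Epq_LG p q : p != q -> LG (DA (Epq p q)).
Proof.
move=> Hpq; apply: lg_gen; left; exists p, q; split => //; split; first exact: DerE_DAm.
by move=> b; apply: eqA_pt => x; rewrite DA_Epq.
Qed.

Lemma Xj_LG j i1 : val i1 = 0%N -> (0 < val j)%N -> LG (DA (Xj j i1)).
Proof.
move=> Hi Hj; apply: lg_gen; right; exists j, i1; split => //; split; first exact: DerE_DAm.
have Hji : j != i1 by apply/eqP => E; move: Hj; rewrite E Hi.
by move=> b; apply: eqA_pt => x; rewrite DA_Xj.
Qed.

Lemma LG_ext D D' : LG D -> DerE s t I D' ->
  (forall f, inCQ s t f -> forall p, D f p = D' f p) -> LG D'.
Proof. by move=> HD HD' H; apply: lg_eq HD HD' _; apply: hheq_pt. Qed.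

Lemma Nsplit N (i1 : 'I_a) : \sum_(i < a) N i i = 0 -> forall i j,
  N i j = (\sum_(p < a) 1 * (\sum_(q < a) (if p != q then N p q else 0) * Epq p q i j))
        + \sum_(k < a) (if k != i1 then N k k else 0) * Xj k i1 i j.
Proof.
move=> Htr i j.
have H1 : \sum_(p < a) 1 * (\sum_(q < a) (if p != q then N p q else 0) * Epq p q i j)
          = if i != j then N i j else 0.
  transitivity (\sum_(p < a) (if p == i then (if p != j then N p j else 0) else 0)); last first.
    by rewrite sum_deltal.
  apply: eq_bigr => p _; rewrite mul1r /Epq [i == p]eq_sym.
  case: (p =P i) => [_|_] /=; last by rewrite big1 // => q _; rewrite mulr0.
  rewrite (bigD1 j) //= ?eqxx mulr1 [X in _ + X]big1 ?addr0 // => q /negbTE.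
  by rewrite eq_sym => ->; rewrite mulr0.
rewrite H1 /Xj; case: (i =P j) => [<-|Hij] /=; last first.
  by rewrite big1 ?addr0 // => k _; rewrite mulr0.
rewrite add0r; case: (i =P i1) => [->|Hi1].
  transitivity (- \sum_(k < a | k != i1) N k k).
    by move: Htr; rewrite (bigD1 i1) //= => /eqP; rewrite addr_eq0 => /eqP.
  rewrite -sumrN big_mkcond /=; apply: eq_bigr => k _.
  case: (k =P i1) => [->|Hk] /=; first by rewrite mul0r.
  have -> : (i1 == k) = false by apply/eqP => E; apply: Hk; rewrite E.
  by rewrite mulrN1.
rewrite (bigD1 i) //= ?eqxx (introF eqP Hi1) mulr1 [X in _ + X]big1 ?addr0 //.
by move=> k /negbTE; rewrite eq_sym => ->; rewrite mulr0.
Qed.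

Lemma LG_DA N : \sum_(i < a) N i i = 0 -> LG (DA N).
Proof.
move=> Htr; case: (leqP a 0) => Ha.
  have H := LG_ext (D := @dzero V Ar) (D' := DA N) (lg_zero _ _ _ _) (DerE_DAm N).
  apply: H => f _ p.
  by rewrite /DA big1 // => q; move: (leq_trans (ltn_ord q) Ha).
pose i1 : 'I_a := Ordinal Ha.
pose F1 := \big[@dadd V Ar/@dzero V Ar]_(p <- index_enum 'I_a) \big[@dadd V Ar/@dzero V Ar]_(q <- index_enum 'I_a)
   (if p != q then dscale (N p q) (DA (Epq p q)) else @dzero V Ar).
pose F2 := \big[@dadd V Ar/@dzero V Ar]_(k <- index_enum 'I_a)
   (if k != i1 then dscale (N k k) (DA (Xj k i1)) else @dzero V Ar).
have HF : LG (dadd F1 F2).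
  apply: lg_add; apply: lie_sum => p; first apply: lie_sum => q.
    by case: ifP => Hpq; [apply: lg_scale; apply: Epq_LG | apply: lg_zero].
  case: ifP => Hp; last exact: lg_zero.
  apply: lg_scale; apply: Xj_LG => //; rewrite lt0n; apply/negP => /eqP E.
  by move/negP: Hp; apply; apply/eqP; apply: val_inj.
apply: (LG_ext HF (DerE_DAm N)) => f _ x.
rewrite /dadd /eadd /F1 /F2 !dsumE.
rewrite (DA_ext o alpha f x (Nsplit i1 Htr)).
have EA : forall p, DA (fun i j => \sum_(q < a) (if p != q then N p q else 0) * Epq p q i j) f x
   = \sum_(q < a) (if p != q then N p q else 0) * DA (Epq p q) f x :=
  fun p => DA_sumN o alpha (index_enum _) (fun q => if p != q then N p q else 0) (fun q => Epq p q) f x.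
have EA' : DA (fun i j => \sum_(p < a) 1 * (\sum_(q < a) (if p != q then N p q else 0) * Epq p q i j)) f x
   = \sum_(p < a) 1 * DA (fun i j => \sum_(q < a) (if p != q then N p q else 0) * Epq p q i j) f x :=
  DA_sumN o alpha (index_enum _) (fun _ => 1) (fun p i j => \sum_(q < a) (if p != q then N p q else 0) * Epq p q i j) f x.
have EB : DA (fun i j => \sum_(k < a) (if k != i1 then N k k else 0) * Xj k i1 i j) f x
   = \sum_(k < a) (if k != i1 then N k k else 0) * DA (Xj k i1) f x :=
  DA_sumN o alpha (index_enum _) (fun k => if k != i1 then N k k else 0) (fun k => Xj k i1) f x.
rewrite -[RHS](DA_ext o alpha f x (N := fun i j => 1 * (\sum_(p < a) 1 * (\sum_(q < a) (if p != q then N p q else 0) * Epq p q i j))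
        + 1 * \sum_(k < a) (if k != i1 then N k k else 0) * Xj k i1 i j)); last by move=> i j; rewrite !mul1r.
rewrite DA_lin EA' EB !mul1r; congr (_ + _).
  apply: eq_bigr => p _; rewrite dsumE mul1r EA; apply: eq_bigr => q _.
  by case: ifP => _; rewrite ?mul0r.
by apply: eq_bigr => k _; case: ifP => _; rewrite ?mul0r.
Qed.


Lemma DA_addN N N' f p : DA (fun i j => N i j + N' i j) f p = DA N f p + DA N' f p.
Proof.
have := DA_lin o alpha N N' 1 1 f p; rewrite !mul1r => <-.
by apply: DA_ext => i j; rewrite !mul1r.
Qed.

Lemma DerE_dzero : DerE s t I (@dzero V Ar).
Proof.
apply: (DerE_ext (DerE_DAm (fun _ _ => 0))) => f _ p.
by rewrite /DA /dzero /ezero big1 // => q _; rewrite big1 ?if_same // => i _; rewrite mulr0.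
Qed.

Lemma LG_inv D : LG D -> DerE s t I D /\ exists2 N, \sum_(i < a) N i i = 0 & hheq s t I (DA N) D.
Proof.
elim=> {D} [D HG | | D D' _ [HD [N HN H]] _ [HD' [N' HN' H']] | c D _ [HD [N HN H]]
           | D D' _ [HD [N HN H]] _ [HD' [N' HN' H']] | D D' _ [HD [N HN H]] HD' Hh].
- case: HG => [[p [q [Hpq Hon]]] | [j [i1 [Hi Hj Hon]]]].
    split; first by case: Hon.
    exists (Epq p q).
      rewrite big1 // => i _; rewrite /Epq; case: (i =P p) => [E|] //=.
      by case: (i =P q) => [E'|] //; move/eqP: Hpq; rewrite -E -E'.
    by apply: (hheq_on_arrows Hon) => b x; rewrite DA_Epq.
  have Hji : j != i1 by apply/eqP => E; move: Hj; rewrite E Hi.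
  split; first by case: Hon.
  exists (Xj j i1); last by apply: (hheq_on_arrows Hon) => b x; rewrite DA_Xj.
  rewrite /Xj (bigD1 j) //= eqxx (bigD1 i1) /=; last by rewrite eq_sym.
  have Hij1 : (i1 == j) = false by apply/negbTE; rewrite eq_sym.
  rewrite eqxx Hij1 ?eqxx big1 ?addr0.
    by rewrite subrr.
  by move=> i /andP [Hi1 Hij]; rewrite eqxx (negbTE Hij) (negbTE Hi1).
- split; first exact: DerE_dzero.
  exists (fun _ _ => 0); first by rewrite big1.
  apply: hheq_pt => f _ p; rewrite /DA /dzero /ezero big1 // => q _.
  by rewrite big1 ?if_same // => i _; rewrite mulr0.
- split; first exact: DerE_add.
  exists (fun i j => N i j + N' i j); first by rewrite big_split /= HN HN' addr0.
  apply: hheq_trans (hheq_add H H'); apply: hheq_pt => f _ p.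
  by rewrite DA_addN.
- split; first exact: DerE_scale.
  exists (fun i j => c * N i j); first by rewrite -mulr_sumr HN mulr0.
  apply: hheq_trans (hheq_scale c H); apply: hheq_pt => f _ p.
  rewrite /dscale /escale -[RHS]addr0 -(mul0r (DA N f p)) -DA_lin.
  by apply: DA_ext => i j; rewrite mul0r addr0.
- split; first exact: DerE_br.
  exists (fun i j => \sum_(k < a) N' i k * N k j - \sum_(k < a) N i k * N' k j).
    rewrite sumrB exchange_big /=; apply/eqP; rewrite subr_eq0; apply/eqP.
    by apply: eq_bigr => i _; apply: eq_bigr => k _; rewrite mulrC.
  apply: hheq_trans (hheq_br (DerE_DAm N) HD (DerE_DAm N') HD' H H').
  apply: hheq_pt => f _ p; rewrite /dbr /eadd /eopp !(DA_comp o Hinj).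
  rewrite -[X in _ = _ + - X]mul1r -mulNr -[X in _ = X + _]mul1r -DA_lin.
  by apply: DA_ext => i j; rewrite mul1r mulN1r.
- split => //; exists N => //; exact: hheq_trans H Hh.
Qed.

End Main.

Section Phi.
Variable a : nat.
Definition trK (D : elt bool 'I_a -> elt bool 'I_a) : CC := \sum_(i < a) matK D i i.
Definition Nphi (D : elt bool 'I_a -> elt bool 'I_a) (i j : 'I_a) : CC :=
  matK D i j - (if i == j then trK D / a%:R else 0).

Lemma a_neq0 (i : 'I_a) : (a%:R : CC) != 0.
Proof. by rewrite pnatr_eq0 -lt0n; apply: leq_ltn_trans (ltn_ord i). Qed.

Lemma tr_Nphi D : \sum_(i < a) Nphi D i i = 0.
Proof.
case: (posnP a) => Ha.
  by rewrite big1 // => i; move: (ltn_ord i); rewrite {2}Ha.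
rewrite /Nphi sumrB.
under [X in _ - X]eq_bigr do rewrite eqxx.
have Ha' : (a%:R : CC) != 0 by rewrite pnatr_eq0 -lt0n.
by rewrite sumr_const card_ord -(mulr_natr (trK D / a%:R) a) divfK // subrr.
Qed.

Lemma Nphi_eq D D' c : (forall i j, matK D i j - matK D' i j = if i == j then c else 0) ->
  forall i j, Nphi D i j = Nphi D' i j.
Proof.
move=> H i j; have Ha := a_neq0 i.
have Htr : trK D - trK D' = c *+ a.
  rewrite /trK -sumrB.
  under eq_bigr do rewrite H eqxx.
  by rewrite sumr_const card_ord.
have Hd : trK D / a%:R - trK D' / a%:R = c.
  by rewrite -mulrBl Htr -(mulr_natr c a) mulfK.
rewrite /Nphi; move: (H i j); case: (i == j) => Hij.
  have E1 : matK D i j = c + matK D' i j by rewrite -Hij subrK.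
  have E2 : trK D / a%:R = c + trK D' / a%:R by rewrite -Hd subrK.
  rewrite E1 E2; ring.
by apply/eqP; rewrite !subr0 -subr_eq0 Hij.
Qed.

End Phi.

Section Phi2.
Variable a : nat.
Local Notation KD := (elt bool 'I_a -> elt bool 'I_a).

Lemma Nphi_add (D D' : KD) i j : Nphi (dadd D D') i j = Nphi D i j + Nphi D' i j.
Proof.
rewrite /Nphi.
have -> : trK (dadd D D') = trK D + trK D' by rewrite /trK -big_split.
rewrite mulrDl; rewrite /matK /dadd /eadd; case: (i == j); ring.
Qed.

Lemma Nphi_scale c (D : KD) i j : Nphi (dscale c D) i j = c * Nphi D i j.
Proof.
rewrite /Nphi.
have -> : trK (dscale c D) = c * trK D by rewrite /trK mulr_sumr.
rewrite /matK /dscale /escale; case: (i == j); ring.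
Qed.

Lemma Nphi_br (D D' : KD) i j : DerE (kron_s a) (kron_t a) (kron_I a) D ->
  DerE (kron_s a) (kron_t a) (kron_I a) D' ->
  Nphi (dbr D D') i j = \sum_(k < a) Nphi D' i k * Nphi D k j - \sum_(k < a) Nphi D i k * Nphi D' k j.
Proof.
move=> HD HD'.
have Htr : trK (dbr D D') = 0.
  rewrite /trK; under eq_bigr do rewrite matK_br //.
  rewrite sumrB exchange_big /=; apply/eqP; rewrite subr_eq0; apply/eqP.
  by apply: eq_bigr => i' _; apply: eq_bigr => k _; rewrite mulrC.
rewrite {1}/Nphi Htr mul0r if_same subr0 matK_br //.
rewrite /Nphi !sum_shift.
case: (i == j); ring.
Qed.

Lemma Nphi_DAK N i j : \sum_(k < a) N k k = 0 -> Nphi (DAK N) i j = N i j.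
Proof.
move=> H; rewrite /Nphi /trK.
under eq_bigr do rewrite matK_DAK.
by rewrite H mul0r if_same subr0 matK_DAK.
Qed.
End Phi2.

Theorem proposition6p3 (V Ar : finType) (s t : Ar -> V) (o w : V)
    (rels : elt V Ar -> Prop) (a : nat) (alpha : 'I_a -> Ar) :
  is_toupie s t o w ->
  (forall r, rels r -> toupie_rel s t o w r) ->
  admissible s t (ideal_gen s t rels) ->
  injective alpha ->
  (forall b, ((s b == o) && (t b == w)) = (b \in codom alpha)) ->
  let I := ideal_gen s t rels in
  let G := fun D =>
    (exists p q : 'I_a, p != q /\
       on_arrows s t I D (fun b => if b == alpha p then earr s (alpha q) else ezero))
    \/
    (exists j i1 : 'I_a, [/\ val i1 = 0%N, (0 < val j)%N &
       on_arrows s t I D (fun b =>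
         if b == alpha j then earr s (alpha j)
         else if b == alpha i1 then eopp (earr s (alpha i1)) else ezero)]) in
  HH1_iso_sub (kron_s a) (kron_t a) (kron_I a) s t I (lie_gen s t I G).
Proof.
move=> [How Hin Hout _] _ [HI2 Hm] Hinj Hcod I G.
have Hst : forall q, (s (alpha q) == o) && (t (alpha q) == w) by move=> q; rewrite Hcod codom_f.
have Hs : forall q, s (alpha q) = o by move=> q; case/andP: (Hst q) => /eqP.
have Ht : forall q, t (alpha q) = w by move=> q; case/andP: (Hst q) => _ /eqP.
have Hno : forall b, t b != o by move=> b; move: (Hin o); rewrite eqxx => /forallP; apply.
have Hnw : forall b, s b != w by move=> b; move: (Hout w); rewrite eqxx => /forallP; apply.
have Hm' : exists m, forall f, inCQ s t f -> inRpow m f -> I f by [].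
exists (fun D => DA o alpha (Nphi D)); split.
- move=> D HD; split; first exact: (DerE_DAm Hs Ht Hno Hnw HI2).
  exact (LG_DA Hs Ht Hno Hnw Hinj HI2 (tr_Nphi D)).
- move=> D D' HD HD' Hh; apply: hheq_pt => f _ p; apply: DA_ext.
  have [c Hc] := Kinner_scalar Hh.
  by apply: (Nphi_eq (c := c)) => i j; rewrite -Hc.
split.
- move=> D D' HD HD'; apply: hheq_pt => f _ p.
  rewrite /dadd /eadd -DA_addN; apply: DA_ext => i j; exact: Nphi_add.
- move=> c D HD; apply: hheq_pt => f _ p.
  rewrite /dscale /escale -[X in _ = X]addr0 -(mul0r (DA o alpha (Nphi D) f p)) -DA_lin.
  by apply: DA_ext => i j; rewrite Nphi_scale mul0r addr0.
- move=> D D' HD HD'; apply: hheq_pt => f _ p.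
  rewrite /dbr /eadd /eopp !(DA_comp o Hinj).
  rewrite -[X in _ = _ + - X]mul1r -mulNr -[X in _ = X + _]mul1r -DA_lin.
  by apply: DA_ext => i j; rewrite Nphi_br // mul1r mulN1r.
- move=> D HD Hin'.
  have [c Hc] := DA_inner Hs Ht Hinj HI2 Hin'.
  apply: (Kinner_of_scalar (c := c + trK D / a%:R) HD) => i j.
  move: (Hc i j); rewrite /Nphi; case: (i == j) => /eqP; rewrite subr_eq => /eqP -> //.
  by rewrite addr0.
- move=> D2 HD2 HL.
  have [_ [N HN H]] := LG_inv Hs Ht Hno Hnw Hinj HI2 Hm HL.
  exists (DAK N); first exact: DerE_DAK.
  apply: hheq_trans H; apply: hheq_pt => f _ p; apply: DA_ext => i j.
  exact: Nphi_DAK.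
Qed.
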